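(* Let $R_0$ be a commutative Noetherian ring. Let $R_0[\mathbb Q]=R_0[a_{ij},\ell_{ij}\ (1\le i\le 2,1\le j\le 3),\psi_{12},\psi_{13},\psi_{23},z_1,z_2]$ be a polynomial ring in these $17$ indeterminates and let $\mathbb Q$ be the complex over $R_0[\mathbb Q]$ described below. Let $R_0[\mathbb B]=R_0[u_{ij}\ (1\le i\le 2,1\le j\le 3),\pi_1,\pi_2,\pi_3,w_1,z_2]$ be a polynomial ring in these $11$ indeterminates and let $\mathbb B$ be the complex over $R_0[\mathbb B]$ described below. Then there is a surjective $R_0$-algebra homomorphism $\Phi:R_0[\mathbb Q]\to R_0[\mathbb B]$ such that the complexes $\mathbb Q\otimes_{R_0[\mathbb Q]}R_0[\mathbb B]$ and $\mathbb B$ are isomorphic.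
   Context: The complex $\mathbb Q$: $0\to R^2\xrightarrow{q_3}R^6\xrightarrow{q_2}R^5\xrightarrow{q_1}R$ (with $R=R_0[\mathbb Q]$). Write $A=(a_{ij})$, $L=(\ell_{ij})$ ($2\times 3$), $P=(\psi_{23},-\psi_{13},\psi_{12})^{\rm T}$, $N=\sum_{i=1}^3(a_{1i}\ell_{2i}-a_{2i}\ell_{1i})$. $q_1=[g_1\ g_2\ g_3\ g_4\ g_5]$ with $g_1=-\det\begin{bmatrix}\psi_{23}&-\psi_{13}&\psi_{12}\\ \ell_{11}&\ell_{12}&\ell_{13}\\ \ell_{21}&\ell_{22}&\ell_{23}\end{bmatrix}-z_2N-z_2z_1$, $g_2=P^{\rm T}A^{\rm T}\begin{bmatrix}\ell_{21}\\-\ell_{11}\end{bmatrix}-z_2(a_{12}a_{23}-a_{13}a_{22})+z_1\psi_{23}$, $g_3=P^{\rm T}A^{\rm T}\begin{bmatrix}\ell_{22}\\-\ell_{12}\end{bmatrix}+z_2(a_{11}a_{23}-a_{13}a_{21})-z_1\psi_{13}$, $g_4=P^{\rm T}A^{\rm T}\begin{bmatrix}\ell_{23}\\-\ell_{13}\end{bmatrix}-z_2(a_{11}a_{22}-a_{12}a_{21})+z_1\psi_{12}$, $g_5=-\det(AL^{\rm T})-z_1N-z_1^2$. $q_2$ ($5\times6$) has columns (rows 1 to 5): $C_1=(\psi_{12}a_{23}-\psi_{13}a_{22}+\psi_{23}a_{21},\ -\ell_{22}\psi_{12}-\ell_{23}\psi_{13}+z_2a_{21},\ \ell_{21}\psi_{12}-\ell_{23}\psi_{23}+z_2a_{22},\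 \ell_{21}\psi_{13}+\ell_{22}\psi_{23}+z_2a_{23},\ 0)$; $C_2=(-\psi_{12}a_{13}+\psi_{13}a_{12}-\psi_{23}a_{11},\ \psi_{12}\ell_{12}+\psi_{13}\ell_{13}-z_2a_{11},\ -\psi_{12}\ell_{11}+\psi_{23}\ell_{13}-z_2a_{12},\ -\psi_{13}\ell_{11}-\psi_{23}\ell_{12}-z_2a_{13},\ 0)$; $C_3=(z_1,\ \ell_{12}\ell_{23}-\ell_{13}\ell_{22},\ -(\ell_{11}\ell_{23}-\ell_{13}\ell_{21}),\ \ell_{11}\ell_{22}-\ell_{12}\ell_{21},\ -z_2)$; $C_4=(a_{12}a_{23}-a_{13}a_{22},\ -(a_{12}\ell_{22}-a_{22}\ell_{12})-(a_{13}\ell_{23}-a_{23}\ell_{13})-z_1,\ a_{12}\ell_{21}-a_{22}\ell_{11},\ a_{13}\ell_{21}-a_{23}\ell_{11},\ -\psi_{23})$; $C_5=(-(a_{11}a_{23}-a_{13}a_{21}),\ a_{11}\ell_{22}-a_{21}\ell_{12},\ -(a_{11}\ell_{21}-a_{21}\ell_{11})-(a_{13}\ell_{23}-a_{23}\ell_{13})-z_1,\ a_{13}\ell_{22}-a_{23}\ell_{12},\ \psi_{13})$; $C_6=(a_{11}a_{22}-a_{12}a_{21},\ a_{11}\ell_{23}-a_{21}\ell_{13},\ a_{12}\ell_{23}-a_{22}\ell_{13},\ -(a_{11}\ell_{21}-a_{21}\ell_{11})-(a_{12}\ell_{22}-a_{22}\ell_{12})-z_1,\ -\psi_{12})$. $q_3$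 ($6\times2$), rows (column 1; column 2): $(a_{11}\ell_{11}+a_{12}\ell_{12}+a_{13}\ell_{13};\ a_{11}\ell_{21}+a_{12}\ell_{22}+a_{13}\ell_{23}+z_1)$, $(a_{21}\ell_{11}+a_{22}\ell_{12}+a_{23}\ell_{13}-z_1;\ a_{21}\ell_{21}+a_{22}\ell_{22}+a_{23}\ell_{23})$, $(-a_{11}\psi_{23}+a_{12}\psi_{13}-a_{13}\psi_{12};\ -a_{21}\psi_{23}+a_{22}\psi_{13}-a_{23}\psi_{12})$, $(-\ell_{12}\psi_{12}-\ell_{13}\psi_{13}+z_2a_{11};\ -\ell_{22}\psi_{12}-\ell_{23}\psi_{13}+z_2a_{21})$, $(\ell_{11}\psi_{12}-\ell_{13}\psi_{23}+z_2a_{12};\ \ell_{21}\psi_{12}-\ell_{23}\psi_{23}+z_2a_{22})$, $(\ell_{11}\psi_{13}+\ell_{12}\psi_{23}+z_2a_{13};\ \ell_{21}\psi_{13}+\ell_{22}\psi_{23}+z_2a_{23})$. The complex $\mathbb B$: $0\to R^2\xrightarrow{b_3}R^6\xrightarrow{b_2}R^5\xrightarrow{b_1}R$ (with $R=R_0[\mathbb B]$). Let $U=(u_{ij})$ ($2\times3$), $\Pi=(\pi_1,\pi_2,\pi_3)^{\rm T}$, $(U\Pi)_1,(U\Pi)_2$ the entries of $U\Pi$, and $\Delta_1=u_{12}u_{23}-u_{13}u_{22}$, $\Delta_2=-(u_{11}u_{23}-u_{13}u_{21})$, $\Delta_3=u_{11}u_{22}-u_{12}u_{21}$. $b_1=[(U\Pi)_1,\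 (U\Pi)_2,\ z_2\Delta_1-w_1\pi_1,\ z_2\Delta_2-w_1\pi_2,\ z_2\Delta_3-w_1\pi_3]$. $b_2$ ($5\times 6$), rows: $((U\Pi)_2,\ 0,\ -w_1,\ -z_2u_{21},\ -z_2u_{22},\ -z_2u_{23})$, $(-(U\Pi)_1,\ w_1,\ 0,\ z_2u_{11},\ z_2u_{12},\ z_2u_{13})$, $(0,\ u_{21},\ -u_{11},\ 0,\ -\pi_3,\ \pi_2)$, $(0,\ u_{22},\ -u_{12},\ \pi_3,\ 0,\ -\pi_1)$, $(0,\ u_{23},\ -u_{13},\ -\pi_2,\ \pi_1,\ 0)$. $b_3$ ($6\times 2$), rows: $(w_1, z_2)$, $((U\Pi)_1,0)$, $((U\Pi)_2,0)$, $(\Delta_1,\pi_1)$, $(\Delta_2,\pi_2)$, $(\Delta_3,\pi_3)$. An isomorphism of complexes means a family of isomorphisms of the modules in each degree commuting with the differentials. *)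

(* Defs.v *)
From HB Require Import structures.
From mathcomp Require Import all_boot all_order all_algebra.
From mathcomp Require Export mpoly.
Set Implicit Arguments. Unset Strict Implicit. Unset Printing Implicit Defensive.
Import GRing.Theory.
Local Open Scope ring_scope.

Definition is_ideal (R : comNzRingType) (I : R -> Prop) : Prop :=
  [/\ I 0, (forall x y, I x -> I y -> I (x + y)) & (forall r x, I x -> I (r * x))].

Definition noetherian (R : comNzRingType) : Prop :=
  forall I : nat -> R -> Prop,
    (forall n, is_ideal (I n)) ->
    (forall n x, I n x -> I n.+1 x) ->
    exists N, forall n, (N <= n)%N -> forall x, I n x -> I N x.

Definition mx_of_rows (T : nmodType) (m n : nat) (s : seq (seq T)) : 'M[T]_(m, n) :=
  \matrix_(i < m, j < n) nth 0 (nth [::] s i) j.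

Section Complexes.
Variable R0 : comNzRingType.

Definition RQ := {mpoly R0[17]}.
Definition QX (k : nat) : RQ := 'X_(inord k).
Definition qa (i j : nat) : RQ := QX (3 * i.-1 + j.-1).
Definition ql (i j : nat) : RQ := QX (6 + 3 * i.-1 + j.-1).
Definition psi12 : RQ := QX 12.
Definition psi13 : RQ := QX 13.
Definition psi23 : RQ := QX 14.
Definition qz1 : RQ := QX 15.
Definition qz2 : RQ := QX 16.

Definition det3 (T : comNzRingType) (x11 x12 x13 x21 x22 x23 x31 x32 x33 : T) : T :=
  x11 * (x22 * x33 - x23 * x32) - x12 * (x21 * x33 - x23 * x31)
  + x13 * (x21 * x32 - x22 * x31).

Definition QN : RQ := \sum_(i < 3) (qa 1 i.+1 * ql 2 i.+1 - qa 2 i.+1 * ql 1 i.+1).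
(* P = (psi23, -psi13, psi12)^T ; (A P)_k *)
Definition AP (k : nat) : RQ := qa k 1 * psi23 - qa k 2 * psi13 + qa k 3 * psi12.
Definition PtAt (x y : RQ) : RQ := AP 1 * x + AP 2 * y.
Definition ALt (i k : nat) : RQ := \sum_(j < 3) qa i j.+1 * ql k j.+1.

Definition g1 : RQ :=
  - det3 psi23 (- psi13) psi12 (ql 1 1) (ql 1 2) (ql 1 3) (ql 2 1) (ql 2 2) (ql 2 3)
  - qz2 * QN - qz2 * qz1.
Definition g2 : RQ := PtAt (ql 2 1) (- ql 1 1)
  - qz2 * (qa 1 2 * qa 2 3 - qa 1 3 * qa 2 2) + qz1 * psi23.
Definition g3 : RQ := PtAt (ql 2 2) (- ql 1 2)
  + qz2 * (qa 1 1 * qa 2 3 - qa 1 3 * qa 2 1) - qz1 * psi13.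
Definition g4 : RQ := PtAt (ql 2 3) (- ql 1 3)
  - qz2 * (qa 1 1 * qa 2 2 - qa 1 2 * qa 2 1) + qz1 * psi12.
Definition g5 : RQ := - (ALt 1 1 * ALt 2 2 - ALt 1 2 * ALt 2 1) - qz1 * QN - qz1 ^+ 2.

Definition q1 : 'M[RQ]_(1, 5) := mx_of_rows 1 5 [:: [:: g1; g2; g3; g4; g5]].

Definition qC1 : seq RQ :=
  [:: psi12 * qa 2 3 - psi13 * qa 2 2 + psi23 * qa 2 1;
      - ql 2 2 * psi12 - ql 2 3 * psi13 + qz2 * qa 2 1;
      ql 2 1 * psi12 - ql 2 3 * psi23 + qz2 * qa 2 2;
      ql 2 1 * psi13 + ql 2 2 * psi23 + qz2 * qa 2 3;
      0].
Definition qC2 : seq RQ :=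
  [:: - psi12 * qa 1 3 + psi13 * qa 1 2 - psi23 * qa 1 1;
      psi12 * ql 1 2 + psi13 * ql 1 3 - qz2 * qa 1 1;
      - psi12 * ql 1 1 + psi23 * ql 1 3 - qz2 * qa 1 2;
      - psi13 * ql 1 1 - psi23 * ql 1 2 - qz2 * qa 1 3;
      0].
Definition qC3 : seq RQ :=
  [:: qz1;
      ql 1 2 * ql 2 3 - ql 1 3 * ql 2 2;
      - (ql 1 1 * ql 2 3 - ql 1 3 * ql 2 1);
      ql 1 1 * ql 2 2 - ql 1 2 * ql 2 1;
      - qz2].
Definition qC4 : seq RQ :=
  [:: qa 1 2 * qa 2 3 - qa 1 3 * qa 2 2;
      - (qa 1 2 * ql 2 2 - qa 2 2 * ql 1 2) - (qa 1 3 * ql 2 3 - qa 2 3 * ql 1 3) - qz1;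
      qa 1 2 * ql 2 1 - qa 2 2 * ql 1 1;
      qa 1 3 * ql 2 1 - qa 2 3 * ql 1 1;
      - psi23].
Definition qC5 : seq RQ :=
  [:: - (qa 1 1 * qa 2 3 - qa 1 3 * qa 2 1);
      qa 1 1 * ql 2 2 - qa 2 1 * ql 1 2;
      - (qa 1 1 * ql 2 1 - qa 2 1 * ql 1 1) - (qa 1 3 * ql 2 3 - qa 2 3 * ql 1 3) - qz1;
      qa 1 3 * ql 2 2 - qa 2 3 * ql 1 2;
      psi13].
Definition qC6 : seq RQ :=
  [:: qa 1 1 * qa 2 2 - qa 1 2 * qa 2 1;
      qa 1 1 * ql 2 3 - qa 2 1 * ql 1 3;
      qa 1 2 * ql 2 3 - qa 2 2 * ql 1 3;
      - (qa 1 1 * ql 2 1 - qa 2 1 * ql 1 1) - (qa 1 2 * ql 2 2 - qa 2 2 * ql 1 2) - qz1;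
      - psi12].

Definition q2 : 'M[RQ]_(5, 6) :=
  (mx_of_rows 6 5 [:: qC1; qC2; qC3; qC4; qC5; qC6])^T.

Definition q3 : 'M[RQ]_(6, 2) := mx_of_rows 6 2
  [:: [:: qa 1 1 * ql 1 1 + qa 1 2 * ql 1 2 + qa 1 3 * ql 1 3;
          qa 1 1 * ql 2 1 + qa 1 2 * ql 2 2 + qa 1 3 * ql 2 3 + qz1];
      [:: qa 2 1 * ql 1 1 + qa 2 2 * ql 1 2 + qa 2 3 * ql 1 3 - qz1;
          qa 2 1 * ql 2 1 + qa 2 2 * ql 2 2 + qa 2 3 * ql 2 3];
      [:: - qa 1 1 * psi23 + qa 1 2 * psi13 - qa 1 3 * psi12;
          - qa 2 1 * psi23 + qa 2 2 * psi13 - qa 2 3 * psi12];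
      [:: - ql 1 2 * psi12 - ql 1 3 * psi13 + qz2 * qa 1 1;
          - ql 2 2 * psi12 - ql 2 3 * psi13 + qz2 * qa 2 1];
      [:: ql 1 1 * psi12 - ql 1 3 * psi23 + qz2 * qa 1 2;
          ql 2 1 * psi12 - ql 2 3 * psi23 + qz2 * qa 2 2];
      [:: ql 1 1 * psi13 + ql 1 2 * psi23 + qz2 * qa 1 3;
          ql 2 1 * psi13 + ql 2 2 * psi23 + qz2 * qa 2 3]].

Definition RB := {mpoly R0[11]}.
Definition BX (k : nat) : RB := 'X_(inord k).
Definition bu (i j : nat) : RB := BX (3 * i.-1 + j.-1).
Definition bpi (i : nat) : RB := BX (5 + i).
Definition bw1 : RB := BX 9.
Definition bz2 : RB := BX 10.

Definition UPi (k : nat) : RB := bu k 1 * bpi 1 + bu k 2 * bpi 2 + bu k 3 * bpi 3.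
Definition Delta1 : RB := bu 1 2 * bu 2 3 - bu 1 3 * bu 2 2.
Definition Delta2 : RB := - (bu 1 1 * bu 2 3 - bu 1 3 * bu 2 1).
Definition Delta3 : RB := bu 1 1 * bu 2 2 - bu 1 2 * bu 2 1.

Definition b1 : 'M[RB]_(1, 5) := mx_of_rows 1 5
  [:: [:: UPi 1; UPi 2; bz2 * Delta1 - bw1 * bpi 1; bz2 * Delta2 - bw1 * bpi 2;
          bz2 * Delta3 - bw1 * bpi 3]].

Definition b2 : 'M[RB]_(5, 6) := mx_of_rows 5 6
  [:: [:: UPi 2; 0; - bw1; - bz2 * bu 2 1; - bz2 * bu 2 2; - bz2 * bu 2 3];
      [:: - UPi 1; bw1; 0; bz2 * bu 1 1; bz2 * bu 1 2; bz2 * bu 1 3];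
      [:: 0; bu 2 1; - bu 1 1; 0; - bpi 3; bpi 2];
      [:: 0; bu 2 2; - bu 1 2; bpi 3; 0; - bpi 1];
      [:: 0; bu 2 3; - bu 1 3; - bpi 2; bpi 1; 0]].

Definition b3 : 'M[RB]_(6, 2) := mx_of_rows 6 2
  [:: [:: bw1; bz2]; [:: UPi 1; 0]; [:: UPi 2; 0];
      [:: Delta1; bpi 1]; [:: Delta2; bpi 2]; [:: Delta3; bpi 3]].

End Complexes.

Definition invertible_mx (T : comNzRingType) (n : nat) (M : 'M[T]_n) : Prop :=
  exists N : 'M[T]_n, M *m N = 1%:M /\ N *m M = 1%:M.

(* Isomorphism of two length-3 complexes 0 -> T^2 -d3-> T^6 -d2-> T^5 -d1-> T
   (differentials acting on column vectors): invertible matrices in each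
   degree commuting with the differentials. *)
Definition complex_iso (T : comNzRingType)
  (d1 : 'M[T]_(1, 5)) (d2 : 'M[T]_(5, 6)) (d3 : 'M[T]_(6, 2))
  (e1 : 'M[T]_(1, 5)) (e2 : 'M[T]_(5, 6)) (e3 : 'M[T]_(6, 2)) : Prop :=
  exists (f0 : 'M[T]_1) (f1 : 'M[T]_5) (f2 : 'M[T]_6) (f3 : 'M[T]_2),
    [/\ invertible_mx f0, invertible_mx f1, invertible_mx f2 & invertible_mx f3] /\
    [/\ f0 *m d1 = e1 *m f1, f1 *m d2 = e2 *m f2 & f2 *m d3 = e3 *m f3].

(* Main.v *)
Require Import Defs.
From mathcomp Require Import all_boot all_order all_algebra.
From mathcomp Require Import mpoly.
From mathcomp Require Import ring.
Local Open Scope ring_scope.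
Import GRing.Theory.

Section S.

Variable R0 : comNzRingType.
Local Notation X k := (BX R0 k).
Definition lq : 17.-tuple (RB R0) :=
  [tuple X 0; X 1; X 8 - X 9; 0; 0; X 10;
         - X 4; X 3; 0; 0; 0; 1;
         X 2; - X 7; X 6; X 9; X 5].
Definition Phi : {rmorphism RQ R0 -> RB R0} := comp_mpoly lq.
Lemma PhiX k : (k < 17)%N -> Phi (QX R0 k) = lq`_k.
Proof. move=> hk. by rewrite /QX /= comp_mpolyXU inordK. Qed.
Lemma Pa11 : (qa R0 1 1) \mPo lq = X 0. Proof. by rewrite /qa PhiX. Qed.
Lemma Pa12 : (qa R0 1 2) \mPo lq = X 1. Proof. by rewrite /qa PhiX. Qed.
Lemma Pa13 : (qa R0 1 3) \mPo lq = X 8 - X 9. Proof. by rewrite /qa PhiX. Qed.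
Lemma Pa21 : (qa R0 2 1) \mPo lq = 0. Proof. by rewrite /qa PhiX. Qed.
Lemma Pa22 : (qa R0 2 2) \mPo lq = 0. Proof. by rewrite /qa PhiX. Qed.
Lemma Pa23 : (qa R0 2 3) \mPo lq = X 10. Proof. by rewrite /qa PhiX. Qed.
Lemma Pl11 : (ql R0 1 1) \mPo lq = - X 4. Proof. by rewrite /ql PhiX. Qed.
Lemma Pl12 : (ql R0 1 2) \mPo lq = X 3. Proof. by rewrite /ql PhiX. Qed.
Lemma Pl13 : (ql R0 1 3) \mPo lq = 0. Proof. by rewrite /ql PhiX. Qed.
Lemma Pl21 : (ql R0 2 1) \mPo lq = 0. Proof. by rewrite /ql PhiX. Qed.
Lemma Pl22 : (ql R0 2 2) \mPo lq = 0. Proof. by rewrite /ql PhiX. Qed.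
Lemma Pl23 : (ql R0 2 3) \mPo lq = 1. Proof. by rewrite /ql PhiX. Qed.
Lemma Pp12 : (psi12 R0) \mPo lq = X 2. Proof. by rewrite /psi12 PhiX. Qed.
Lemma Pp13 : (psi13 R0) \mPo lq = - X 7. Proof. by rewrite /psi13 PhiX. Qed.
Lemma Pp23 : (psi23 R0) \mPo lq = X 6. Proof. by rewrite /psi23 PhiX. Qed.
Lemma Pz1 : (qz1 R0) \mPo lq = X 9. Proof. by rewrite /qz1 PhiX. Qed.
Lemma Pz2 : (qz2 R0) \mPo lq = X 5. Proof. by rewrite /qz2 PhiX. Qed.
Lemma Qa11 : Phi (qa R0 1 1) = X 0. Proof. exact: Pa11. Qed.
Lemma Qa12 : Phi (qa R0 1 2) = X 1. Proof. exact: Pa12. Qed.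
Lemma Qa13 : Phi (qa R0 1 3) = X 8 - X 9. Proof. exact: Pa13. Qed.
Lemma Qa21 : Phi (qa R0 2 1) = 0. Proof. exact: Pa21. Qed.
Lemma Qa22 : Phi (qa R0 2 2) = 0. Proof. exact: Pa22. Qed.
Lemma Qa23 : Phi (qa R0 2 3) = X 10. Proof. exact: Pa23. Qed.
Lemma Ql11 : Phi (ql R0 1 1) = - X 4. Proof. exact: Pl11. Qed.
Lemma Ql12 : Phi (ql R0 1 2) = X 3. Proof. exact: Pl12. Qed.
Lemma Ql13 : Phi (ql R0 1 3) = 0. Proof. exact: Pl13. Qed.
Lemma Ql21 : Phi (ql R0 2 1) = 0. Proof. exact: Pl21. Qed.
Lemma Ql22 : Phi (ql R0 2 2) = 0. Proof. exact: Pl22. Qed.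
Lemma Ql23 : Phi (ql R0 2 3) = 1. Proof. exact: Pl23. Qed.
Lemma Qp12 : Phi (psi12 R0) = X 2. Proof. exact: Pp12. Qed.
Lemma Qp13 : Phi (psi13 R0) = - X 7. Proof. exact: Pp13. Qed.
Lemma Qp23 : Phi (psi23 R0) = X 6. Proof. exact: Pp23. Qed.
Lemma Qz1 : Phi (qz1 R0) = X 9. Proof. exact: Pz1. Qed.
Lemma Qz2 : Phi (qz2 R0) = X 5. Proof. exact: Pz2. Qed.
Lemma bu11 : bu R0 1 1 = X 0. Proof. by []. Qed.
Lemma bu12 : bu R0 1 2 = X 1. Proof. by []. Qed.
Lemma bu13 : bu R0 1 3 = X 2. Proof. by []. Qed.
Lemma bu21 : bu R0 2 1 = X 3. Proof. by []. Qed.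
Lemma bu22 : bu R0 2 2 = X 4. Proof. by []. Qed.
Lemma bu23 : bu R0 2 3 = X 5. Proof. by []. Qed.
Lemma bp1 : bpi R0 1 = X 6. Proof. by []. Qed.
Lemma bp2 : bpi R0 2 = X 7. Proof. by []. Qed.
Lemma bp3 : bpi R0 3 = X 8. Proof. by []. Qed.
Lemma bw : bw1 R0 = X 9. Proof. by []. Qed.
Lemma bz : bz2 R0 = X 10. Proof. by []. Qed.

Definition f1 : 'M[RB R0]_5 := mx_of_rows 5 5
  [:: [:: 0; 0; 0; 1; 0];
      [:: -1; 0; 0; 0; 0];
      [:: 0; -1; 0; 0; 0];
      [:: 0; 0; -1; 0; 0];
      [:: 0; 0; 0; 0; 1]].
Definition f2 : 'M[RB R0]_6 := mx_of_rows 6 6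
  [:: [:: 0; -1; 0; 0; 0; 0];
      [:: 0; - X 2; -1; 0; 0; 0];
      [:: 0; - X 5; 0; 0; 0; 1];
      [:: 0; 0; 0; 0; 1; 0];
      [:: 0; 0; 0; -1; 0; 0];
      [:: -1; 0; 0; 0; 0; 0]].

Ltac push := rewrite ?(mul0r, mulr0, add0r, addr0, mul1r, mulr1);
  rewrite ?(rmorphM Phi, rmorphN Phi, rmorphB Phi, rmorphD Phi, rmorph1 Phi, rmorph0 Phi);
  rewrite ?(Qa11, Qa12, Qa13, Qa21, Qa22, Qa23, Ql11, Ql12, Ql13, Ql21, Ql22, Ql23, Qp12, Qp13, Qp23, Qz1, Qz2).
Ltac bsimp := rewrite /UPi /Delta1 /Delta2 /Delta3 ?(bu11, bu12, bu13, bu21, bu22, bu23, bp1, bp2, bp3, bw, bz).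


Definition f3 : 'M[RB R0]_2 := mx_of_rows 2 2 [:: [:: 1; 0]; [:: 0; -1]].
Definition f1i : 'M[RB R0]_5 := mx_of_rows 5 5
  [:: [:: 0; -1; 0; 0; 0];
      [:: 0; 0; -1; 0; 0];
      [:: 0; 0; 0; -1; 0];
      [:: 1; 0; 0; 0; 0];
      [:: 0; 0; 0; 0; 1]].
Definition f2i : 'M[RB R0]_6 := mx_of_rows 6 6
  [:: [:: 0; 0; 0; 0; 0; -1];
      [:: -1; 0; 0; 0; 0; 0];
      [:: X 2; -1; 0; 0; 0; 0];
      [:: 0; 0; 0; 0; -1; 0];
      [:: 0; 0; 0; 1; 0; 0];
      [:: - X 5; 0; 1; 0; 0; 0]].

Definition lp : 11.-tuple (RQ R0) :=
  [tuple qa R0 1 1; qa R0 1 2; psi12 R0; ql R0 1 2; - ql R0 1 1; qz2 R0;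
         psi23 R0; - psi13 R0; qa R0 1 3 + qz1 R0; qz1 R0; qa R0 2 3].

Lemma XO k (hk : (k < 11)%N) : X k = 'X_(Ordinal hk).
Proof. rewrite /BX; have -> : inord k = Ordinal hk by apply/val_inj; rewrite /= inordK. by []. Qed.

Lemma Phi_surj y : (y \mPo lp) \mPo lq = y.
Proof.
rewrite [y \mPo lp]comp_mpolyEX raddf_sum [Z in _ = Z]mpolyE; apply: eq_bigr => m _.
rewrite /= comp_mpolyZ comp_mpolyX rmorph_prod; congr (_ *: _).
rewrite mpolyXE_id; apply: eq_bigr => i _; rewrite rmorphXn; congr (_ ^+ _).
case: i => [[|[|[|[|[|[|[|[|[|[|[|i]]]]]]]]]]] Hi] //; rewrite (tnth_nth 0) /= -XO;
  rewrite ?(comp_mpolyN, comp_mpolyD, Pa11, Pa12, Pa13, Pa23, Pl11, Pl12, Pp12, Pp13, Pp23, Pz1, Pz2) ?opprK //.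
by rewrite subrK.
Qed.

Lemma PhiC c : Phi c%:MP = c%:MP.
Proof. exact: comp_mpolyC. Qed.

Opaque Phi.

Ltac c5 i := case: i => [[|[|[|[|[|i]]]]] ?] //=.
Ltac c6 i := case: i => [[|[|[|[|[|[|i]]]]]] ?] //=.
Ltac c2 i := case: i => [[|[|i]] ?] //=.
Ltac c1 i := case: i => [[|i] ?] //=.
Ltac mxsolve := apply/matrixP => i j; rewrite !mxE ?big_ord_recr ?big_ord0 /= ?mxE.

Lemma eq1 : 1%:M *m map_mx Phi (q1 R0) = b1 R0 *m f1.
Proof.
rewrite mul1mx; mxsolve; c1 i; c5 j;
rewrite /g1 /g2 /g3 /g4 /g5 /QN /ALt /PtAt /AP /det3 ?big_ord_recr ?big_ord0 /=;
push; bsimp; ring.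
Qed.

Lemma eq2 : f1 *m map_mx Phi (q2 R0) = b2 R0 *m f2.
Proof.
mxsolve; c5 i; c6 j; rewrite /qC1 /qC2 /qC3 /qC4 /qC5 /qC6 /=; push; bsimp; ring.
Qed.

Lemma eq3 : f2 *m map_mx Phi (q3 R0) = b3 R0 *m f3.
Proof.
mxsolve; c6 i; c2 j; push; bsimp; ring.
Qed.

Lemma inv1a : f1 *m f1i = 1%:M. Proof. mxsolve; c5 i; c5 j; ring. Qed.
Lemma inv1b : f1i *m f1 = 1%:M. Proof. mxsolve; c5 i; c5 j; ring. Qed.
Lemma inv2a : f2 *m f2i = 1%:M. Proof. mxsolve; c6 i; c6 j; ring. Qed.
Lemma inv2b : f2i *m f2 = 1%:M. Proof. mxsolve; c6 i; c6 j; ring. Qed.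
Lemma inv3 : f3 *m f3 = 1%:M. Proof. mxsolve; c2 i; c2 j; ring. Qed.

End S.

Theorem theorem5p10 (R0 : comNzRingType) (HR0 : noetherian R0) :
  exists Phi : {rmorphism RQ R0 -> RB R0},
    [/\ (forall c : R0, Phi c%:MP = c%:MP),
        (forall y : RB R0, exists x : RQ R0, Phi x = y) &
        complex_iso (map_mx Phi (q1 R0)) (map_mx Phi (q2 R0)) (map_mx Phi (q3 R0))
                    (b1 R0) (b2 R0) (b3 R0)].
Proof.
exists (Phi R0); split.
- exact: PhiC.
- by move=> y; exists (comp_mpoly (lp R0) y); exact: Phi_surj.
- exists 1%:M, (f1 R0), (f2 R0), (f3 R0); split; last first.
    by split; [exact: eq1 | exact: eq2 | exact: eq3].
  split.
  + by exists 1%:M; rewrite mul1mx.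
  + by exists (f1i R0); split; [exact: inv1a | exact: inv1b].
  + by exists (f2i R0); split; [exact: inv2a | exact: inv2b].
  + by exists (f3 R0); split; exact: inv3.
Qed.
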